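(* Let $0<q<1$ and let $s_1,\dots,s_m$ be positive integers with $s_1>1$. Put $y_k:=\prod_{j=1}^k q^{1-s_j}$ for $1\le k\le m$. Then \[ \zeta[s_1,\dots,s_m] = \int \prod_{k=1}^m\bigg(\prod_{r=1}^{s_k-1}\frac{d_qt_r^{(k)}}{t_r^{(k)}}\bigg)\frac{d_qt_{s_k}^{(k)}}{y_k-t_{s_k}^{(k)}}, \] the iterated Jackson $q$-integral over the simplex $1>t_1^{(1)}>\cdots>t_{s_1}^{(1)}>\cdots>t_1^{(m)}>\cdots>t_{s_m}^{(m)}>0$.
   Context: Fix $0<q<1$ and $[x]_q := (1-q^x)/(1-q)$. For positive integers $s_1,\dots,s_m$ with $s_1>1$, $\zeta[s_1,\dots,s_m] := \sum_{k_1>\cdots>k_m>0}\prod_{j=1}^m q^{(s_j-1)k_j}/[k_j]_q^{s_j}$ (sum over positive integers). The Jackson $q$-integral is $\int_0^a g(t)\,d_qt := (1-q)a\sum_{j=0}^\infty q^j g(q^ja)$ for $a>0$. The integral over a simplex $a>u_1>u_2>\cdots>u_N>0$ of $g_1(u_1)d_qu_1\cdots g_N(u_N)d_qu_N$ means the iterated integral $\int_0^a g_1(u_1)\int_0^{u_1}g_2(u_2)\cdots\int_0^{u_{N-1}}g_N(u_N)\,d_qu_N\cdots d_qu_1$, with the variables $t_1^{(1)},\dots,t_{s_m}^{(m)}$ ordered as listed and $a=1$. *)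

(* Defs.v *)
From Stdlib Require Import Reals List.
From Coquelicot Require Import Coquelicot.
Open Scope R_scope.

Definition qnum (q : R) (x : nat) : R := (1 - q ^ x) / (1 - q).

Definition zterm (q : R) (s k : nat) : R := q ^ ((s - 1) * k) / (qnum q k) ^ s.

(* ztail q [s_2;...;s_m] K = sum over K > k_2 > ... > k_m > 0 of the product
   of the summands (a finite sum). *)
Fixpoint ztail (q : R) (s : list nat) (K : nat) : R :=
  match s with
  | nil => 1
  | a :: s' =>
      fold_right Rplus 0
        (map (fun k => zterm q a k * ztail q s' k) (seq 1 (K - 1)))
  end.

Definition qzeta (q : R) (s : list nat) : R :=
  match s with
  | nil => 1
  | a :: s' => Series (fun n => zterm q a (S n) * ztail q s' (S n))
  end.

Definition jackson (q : R) (g : R -> R) (a : R) : R :=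
  (1 - q) * a * Series (fun j => q ^ j * g (q ^ j * a)).

(* iterated Jackson integral over a > u_1 > u_2 > ... > u_N > 0 of
   g_1(u_1) d_q u_1 ... g_N(u_N) d_q u_N *)
Fixpoint qiter (q : R) (gs : list (R -> R)) (a : R) : R :=
  match gs with
  | nil => 1
  | g :: gs' => jackson q (fun u => g u * qiter q gs' u) a
  end.

(* the list of integrand factors: for each k, (s_k - 1) copies of 1/t followed
   by 1/(y_k - t), where y_k = prod_{j<=k} q^{1-s_j}; y is the running product *)
Fixpoint qintegrand (q y : R) (s : list nat) : list (R -> R) :=
  match s with
  | nil => nil
  | a :: s' =>
      let y' := y / q ^ (a - 1) in
      repeat (fun t : R => / t) (a - 1) ++ (fun t : R => / (y' - t)) :: qintegrand q y' s'
  end.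

(* Main.v *)
Require Import Defs.
From Stdlib Require Import Reals List Lia Lra.
From Coquelicot Require Import Coquelicot.
Open Scope R_scope.



Lemma ex_series_le_R (a b : nat -> R) : (forall n, Rabs (a n) <= b n) -> ex_series b -> ex_series a.
Proof. intros H Hb. apply (@ex_series_le R_AbsRing R_CompleteNormedModule a b); [exact H|exact Hb]. Qed.

Lemma Series_nonneg (a : nat -> R) : (forall n, 0 <= a n) -> ex_series a -> 0 <= Series a.
Proof.
  intros Ha Hex.
  replace 0 with (Series (fun n => 0 * a n)).
  - apply Series_le; [intros n; split; [lra| rewrite Rmult_0_l; apply Ha]|exact Hex].
  - rewrite Series_scal_l; ring.
Qed.

Lemma partial_le_Series (a : nat -> R) N : (forall n, 0 <= a n) -> ex_series a ->
  sum_f_R0 a N <= Series a.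
Proof.
  intros Ha Hex.
  rewrite (Series_incr_n a (S N)) by (lia || exact Hex). simpl pred.
  assert (0 <= Series (fun k => a (S N + k)%nat)).
  { apply Series_nonneg; [intros; apply Ha|].
    apply (ex_series_incr_n a (S N)) in Hex. exact Hex. }
  lra.
Qed.

Lemma sum_f_R0_nonneg (a : nat -> R) N : (forall n, 0 <= a n) -> 0 <= sum_f_R0 a N.
Proof. intros Ha; induction N; simpl; [apply Ha| specialize (Ha (S N)); lra]. Qed.

Lemma bounded_ex (a : nat -> R) M : (forall n, 0 <= a n) -> (forall N, sum_f_R0 a N <= M) ->
  ex_series a /\ Series a <= M.
Proof.
  intros Ha HM.
  assert (Hl : ex_finite_lim_seq (sum_n a)).
  { apply ex_finite_lim_seq_incr with M.
    - intros n; rewrite !sum_n_Reals; simpl; specialize (Ha (S n)); lra.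
    - intros n; rewrite sum_n_Reals; apply HM. }
  destruct Hl as [l Hl].
  assert (Hs : is_series a l) by exact Hl.
  split; [exists l; exact Hs|].
  rewrite (is_series_unique _ _ Hs).
  assert (H := is_lim_seq_le (sum_n a) (fun _ => M) l M).
  simpl in H. apply H; [intros; rewrite sum_n_Reals; apply HM| exact Hl| apply is_lim_seq_const].
Qed.

Lemma fin_swap (a : nat -> nat -> R) N : (forall n, ex_series (fun j => a j n)) ->
  ex_series (fun j => sum_f_R0 (fun n => a j n) N) /\
  Series (fun j => sum_f_R0 (fun n => a j n) N) = sum_f_R0 (fun n => Series (fun j => a j n)) N.
Proof.
  intros Hex; induction N as [|N [IH1 IH2]]; simpl.
  - split; [apply Hex| reflexivity].
  - split.
    + apply (ex_series_plus _ _ IH1 (Hex (S N))).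
    + rewrite Series_plus by (apply IH1 || apply Hex). rewrite IH2; reflexivity.
Qed.

Lemma half_tonelli (a : nat -> nat -> R) : (forall j n, 0 <= a j n) ->
  (forall j, ex_series (a j)) -> ex_series (fun j => Series (a j)) ->
  (forall n, ex_series (fun j => a j n)) /\ ex_series (fun n => Series (fun j => a j n)) /\
  Series (fun n => Series (fun j => a j n)) <= Series (fun j => Series (a j)).
Proof.
  intros Ha Hj HS.
  assert (Hn : forall n, ex_series (fun j => a j n)).
  { intros n. apply (ex_series_le_R _ (fun j => Series (a j))); [|exact HS].
    intros j. rewrite Rabs_pos_eq by apply Ha.
    apply Rle_trans with (sum_f_R0 (a j) n).
    - destruct n; simpl; [lra|]. pose proof (sum_f_R0_nonneg (a j) n (Ha j)). lra.
    - apply partial_le_Series; [apply Ha| apply Hj]. }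
  destruct (bounded_ex (fun n => Series (fun j => a j n)) (Series (fun j => Series (a j)))) as [E L].
  - intros n; apply Series_nonneg; [intros; apply Ha| apply Hn].
  - intros N. destruct (fin_swap a N Hn) as [_ <-].
    apply Series_le; [|exact HS]. intros j; split.
    + apply sum_f_R0_nonneg; intros; apply Ha.
    + apply partial_le_Series; [apply Ha| apply Hj].
  - split; [exact Hn| split; [exact E| exact L]].
Qed.

Lemma tonelli (a : nat -> nat -> R) : (forall j n, 0 <= a j n) ->
  (forall n, ex_series (fun j => a j n)) -> ex_series (fun n => Series (fun j => a j n)) ->
  (forall j, ex_series (a j)) /\ ex_series (fun j => Series (a j)) /\
  Series (fun j => Series (a j)) = Series (fun n => Series (fun j => a j n)).
Proof.
  intros Ha Hn HS.
  destruct (half_tonelli (fun n j => a j n)) as [Hj [E L]]; [intros; apply Ha| exact Hn| exact HS|].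
  destruct (half_tonelli a Ha Hj E) as [_ [_ L2]].
  split; [exact Hj| split; [exact E| apply Rle_antisym; [exact L| exact L2]]].
Qed.

Lemma ser_geom c r : 0 <= r < 1 -> is_series (fun j => c * r ^ j) (c / (1 - r)).
Proof.
  intros Hr. unfold Rdiv. rewrite (Rmult_comm c).
  apply is_series_ext with (fun j => scal c (r ^ j)).
  { intros; reflexivity. }
  replace (/ (1 - r) * c) with (scal c (/ (1 - r))) by (unfold scal; simpl; unfold mult; simpl; ring).
  apply (@is_series_scal_l R_AbsRing R_NormedModule). apply is_series_geom. rewrite Rabs_pos_eq; lra.
Qed.



Lemma div_lt1 t Y : 0 < Y -> t < Y -> t / Y < 1.
Proof. intros HY Ht. apply Rmult_lt_reg_r with Y; [lra|]. unfold Rdiv; rewrite Rmult_assoc, Rinv_l by lra. lra. Qed.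

Lemma pow_le1 q n : 0 <= q <= 1 -> q ^ n <= 1.
Proof. intros H. rewrite <- (pow1 n). apply pow_incr; lra. Qed.

Lemma pow_lt1 q n : 0 < q < 1 -> (1 <= n)%nat -> q ^ n <= q.
Proof.
  intros Hq Hn. destruct n; [lia|]. simpl.
  assert (q ^ n <= 1) by (apply pow_le1; lra). nra.
Qed.

Lemma qnum_ge1 q n : 0 < q < 1 -> (1 <= n)%nat -> 1 <= qnum q n.
Proof.
  intros Hq Hn. unfold qnum. apply (Rmult_le_reg_r (1 - q)); [lra|].
  unfold Rdiv; rewrite Rmult_assoc, Rinv_l by lra. pose proof (pow_lt1 q n Hq Hn). lra.
Qed.

Lemma qpow_pos q n : 0 < q -> 0 < q ^ n.
Proof. intros; apply pow_lt; lra. Qed.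

Lemma step_t q Y (f : nat -> R) (H : R -> R) : 0 < q < 1 -> 0 < Y ->
  (forall n, 0 <= f n) -> f 0%nat = 0 ->
  (forall t, 0 < t < Y -> ex_series (fun n => f n * (t / Y) ^ n) /\
                          H t = Series (fun n => f n * (t / Y) ^ n)) ->
  forall t, 0 < t < Y -> ex_series (fun n => f n / qnum q n * (t / Y) ^ n) /\
     jackson q (fun u => / u * H u) t = Series (fun n => f n / qnum q n * (t / Y) ^ n).
Proof.
  intros Hq HY Hf0 Hf00 HH t Ht.
  set (x := t / Y).
  assert (Hx : 0 < x < 1) by (unfold x; split; [apply Rdiv_lt_0_compat; lra| apply div_lt1; lra]).
  destruct (HH t Ht) as [Hex _].
  fold x in Hex.
  assert (Htgt : forall n, 0 <= f n / qnum q n * x ^ n).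
  { intros n. destruct n.
    - rewrite Hf00; unfold Rdiv; rewrite !Rmult_0_l; lra.
    - pose proof (qnum_ge1 q (S n) Hq ltac:(lia)).
      apply Rmult_le_pos; [apply Rdiv_le_0_compat; [apply Hf0| lra]| apply pow_le; lra]. }
  assert (Hex2 : ex_series (fun n => f n / qnum q n * x ^ n)).
  { apply (ex_series_le_R _ (fun n => f n * x ^ n)); [|exact Hex].
    intros n. rewrite Rabs_pos_eq by apply Htgt. destruct n.
    - rewrite Hf00; unfold Rdiv; rewrite !Rmult_0_l; lra.
    - pose proof (qnum_ge1 q (S n) Hq ltac:(lia)).
      apply Rmult_le_compat_r; [apply pow_le; lra|].
      unfold Rdiv. rewrite <- (Rmult_1_r (f (S n))) at 2. apply Rmult_le_compat_l; [apply Hf0|].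
      rewrite <- Rinv_1. apply Rinv_le_contravar; lra. }
  split; [exact Hex2|].
  set (a := fun j n => / t * (f n * x ^ n) * (q ^ n) ^ j).
  assert (Hterm : forall j, q ^ j * (/ (q ^ j * t) * H (q ^ j * t)) = Series (a j)).
  { intros j. pose proof (qpow_pos q j ltac:(lra)).
    assert (Hj1 : q ^ j <= 1) by (apply pow_le1; lra).
    destruct (HH (q ^ j * t) ltac:(split; nra)) as [_ ->].
    rewrite <- Series_scal_l, <- Series_scal_l. apply Series_ext. intros n.
    unfold a. rewrite <- !pow_mult, Nat.mul_comm, pow_mult.
    replace (q ^ j * t / Y) with (q ^ j * x) by (unfold x; field; lra).
    rewrite Rpow_mult_distr. field. lra. }
  unfold jackson. rewrite (Series_ext _ _ Hterm).
  set (b := fun n => / (1 - q) * / t * (f n / qnum q n * x ^ n)).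
  assert (Hb : forall n, is_series (fun j => a j n) (b n)).
  { intros n. unfold a, b. destruct n.
    - rewrite Hf00. apply is_series_ext with (fun j => 0 * q ^ j).
      { intros j; change (0 * q ^ j = / t * (0 * x ^ 0) * (q ^ 0) ^ j); ring. }
      replace (/ (1 - q) * / t * (0 / qnum q 0 * x ^ 0)) with (0 / (1 - q)) by (unfold Rdiv; ring).
      apply ser_geom; lra.
    - pose proof (pow_lt1 q (S n) Hq ltac:(lia)). pose proof (qpow_pos q (S n) ltac:(lra)).
      replace (/ (1 - q) * / t * (f (S n) / qnum q (S n) * x ^ S n))
        with (/ t * (f (S n) * x ^ S n) / (1 - q ^ S n)).
      + apply ser_geom; lra.
      + unfold qnum. field. repeat split; lra. }
  assert (Hab : forall j n, 0 <= a j n).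
  { intros j n. unfold a. apply Rmult_le_pos; [apply Rmult_le_pos|].
    - left; apply Rinv_0_lt_compat; lra.
    - apply Rmult_le_pos; [apply Hf0| apply pow_le; lra].
    - apply pow_le, pow_le; lra. }
  destruct (tonelli a Hab) as [_ [_ Heq]].
  - intros n; exists (b n); apply Hb.
  - apply ex_series_ext with b.
    { intros n; symmetry; apply is_series_unique, Hb. }
    unfold b. apply ex_series_ext with (fun n => scal (/ (1 - q) * / t) (f n / qnum q n * x ^ n)).
    { intros n; reflexivity. }
    apply (@ex_series_scal_l R_AbsRing R_NormedModule). exact Hex2.
  - rewrite Heq. rewrite (Series_ext _ b) by (intros n; apply is_series_unique, Hb).
    unfold b. rewrite Series_scal_l. field. repeat split; lra.
Qed.

Lemma cauchy_geom (d : nat -> R) z : 0 <= z < 1 -> (forall n, 0 <= d n) ->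
  ex_series (fun n => d n * z ^ n) ->
  is_series (fun N => sum_f_R0 d N * z ^ N) (Series (fun n => d n * z ^ n) / (1 - z)).
Proof.
  intros Hz Hd Hex.
  assert (H := is_series_mult (fun n => d n * z ^ n) (fun n => z ^ n) _ _
     (Series_correct _ Hex) (is_series_geom z ltac:(rewrite Rabs_pos_eq; lra))).
  eapply is_series_ext; [|apply H].
  - intros N. simpl. rewrite (Rmult_comm (sum_f_R0 d N)), scal_sum.
    apply sum_eq. intros i Hi. rewrite Rmult_assoc, <- pow_add.
    replace (i + (N - i))%nat with N by lia. reflexivity.
  - eapply ex_series_ext; [|exact Hex]. intros n; symmetry; apply Rabs_pos_eq.
    apply Rmult_le_pos; [apply Hd| apply pow_le; lra].
  - eapply ex_series_ext; [|exists (/ (1 - z)); apply is_series_geom; rewrite Rabs_pos_eq; lra].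
    intros n; symmetry; apply Rabs_pos_eq, pow_le; lra.
Qed.

Definition gY q (d : nat -> R) (N : nat) : R :=
  match N with 0%nat => 0 | S M => sum_f_R0 d M / qnum q (S M) end.

Lemma step_Y q Y (d : nat -> R) (G : R -> R) : 0 < q < 1 -> 0 < Y ->
  (forall n, 0 <= d n) ->
  (forall t, 0 < t < Y -> ex_series (fun n => d n * (t / Y) ^ n) /\
                          G t = Series (fun n => d n * (t / Y) ^ n)) ->
  forall t, 0 < t < Y -> ex_series (fun n => gY q d n * (t / Y) ^ n) /\
     jackson q (fun u => / (Y - u) * G u) t = Series (fun n => gY q d n * (t / Y) ^ n).
Proof.
  intros Hq HY Hd HG t Ht.
  set (x := t / Y).
  assert (Hx : 0 < x < 1) by (unfold x; split; [apply Rdiv_lt_0_compat; lra| apply div_lt1; lra]).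
  destruct (HG t Ht) as [Hex _]. fold x in Hex.
  pose proof (cauchy_geom d x ltac:(lra) Hd Hex) as Hc.
  assert (HD : forall N, 0 <= sum_f_R0 d N) by (intros; apply sum_f_R0_nonneg, Hd).
  assert (Htgt : forall N, 0 <= gY q d N * x ^ N).
  { intros [|N]; simpl gY; [lra|].
    pose proof (qnum_ge1 q (S N) Hq ltac:(lia)).
    apply Rmult_le_pos; [apply Rdiv_le_0_compat; [apply HD| lra]| apply pow_le; lra]. }
  assert (Hex1 : ex_series (fun N => gY q d (S N) * x ^ (S N))).
  { apply (ex_series_le_R _ (fun N => sum_f_R0 d N * x ^ N)); [|exists (Series (fun n => d n * x ^ n) / (1 - x)); exact Hc].
    intros N. rewrite Rabs_pos_eq by apply Htgt. simpl gY.
    pose proof (qnum_ge1 q (S N) Hq ltac:(lia)).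
    assert (sum_f_R0 d N / qnum q (S N) <= sum_f_R0 d N).
    { unfold Rdiv. rewrite <- (Rmult_1_r (sum_f_R0 d N)) at 2. apply Rmult_le_compat_l; [apply HD|].
      rewrite <- Rinv_1. apply Rinv_le_contravar; lra. }
    simpl pow. assert (0 <= x ^ N) by (apply pow_le; lra).
    assert (0 <= sum_f_R0 d N / qnum q (S N)) by (apply Rdiv_le_0_compat; [apply HD|lra]).
    apply Rle_trans with (sum_f_R0 d N / qnum q (S N) * x ^ N).
    - apply Rmult_le_compat_l; [lra| nra].
    - apply Rmult_le_compat_r; lra. }
  assert (Hex2 : ex_series (fun N => gY q d N * x ^ N)).
  { apply (proj2 (@ex_series_incr_1 R_AbsRing R_NormedModule _)). exact Hex1. }
  split; [exact Hex2|].
  set (a := fun j N => / Y * (sum_f_R0 d N * x ^ N) * (q ^ (S N)) ^ j).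
  assert (Hterm : forall j, q ^ j * (/ (Y - q ^ j * t) * G (q ^ j * t)) = Series (a j)).
  { intros j. pose proof (qpow_pos q j ltac:(lra)).
    assert (Hj1 : q ^ j <= 1) by (apply pow_le1; lra).
    destruct (HG (q ^ j * t) ltac:(split; nra)) as [Hexj ->].
    replace (q ^ j * t / Y) with (q ^ j * x) in * by (unfold x; field; lra).
    assert (Hxj : 0 <= q ^ j * x < 1) by (split; nra).
    pose proof (is_series_unique _ _ (cauchy_geom d (q ^ j * x) Hxj Hd Hexj)) as E.
    set (L := Series (fun N : nat => sum_f_R0 d N * (q ^ j * x) ^ N)) in E.
    assert (Hne : 1 - q ^ j * x <> 0) by lra.
    assert (ES : Series (fun n : nat => d n * (q ^ j * x) ^ n) = (1 - q ^ j * x) * L).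
    { rewrite E. field. exact Hne. }
    rewrite ES.
    transitivity (q ^ j / Y * L).
    { unfold x. field. split; [lra|]. intros Hc0. nra. }
    unfold L. rewrite <- Series_scal_l. apply Series_ext. intros N.
    unfold a. rewrite <- !pow_mult. rewrite Rpow_mult_distr.
    replace (S N * j)%nat with (j + N * j)%nat by lia. rewrite pow_add, pow_mult.
    rewrite <- (pow_mult q j N), <- (pow_mult q N j), (Nat.mul_comm j N). field. lra. }
  unfold jackson. rewrite (Series_ext _ _ Hterm).
  set (b := fun N => / (1 - q) * / t * (gY q d (S N) * x ^ (S N))).
  assert (Hb : forall N, is_series (fun j => a j N) (b N)).
  { intros N. unfold a, b. simpl gY.
    pose proof (pow_lt1 q (S N) Hq ltac:(lia)). pose proof (qpow_pos q (S N) ltac:(lra)).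
    replace (/ (1 - q) * / t * (sum_f_R0 d N / qnum q (S N) * x ^ S N))
      with (/ Y * (sum_f_R0 d N * x ^ N) / (1 - q ^ S N)).
    + apply ser_geom; lra.
    + unfold qnum, x. simpl pow in *. field. repeat split; lra. }
  assert (Hab : forall j n, 0 <= a j n).
  { intros j n. unfold a. apply Rmult_le_pos; [apply Rmult_le_pos|].
    - left; apply Rinv_0_lt_compat; lra.
    - apply Rmult_le_pos; [apply HD| apply pow_le; lra].
    - apply pow_le, pow_le; lra. }
  destruct (tonelli a Hab) as [_ [_ Heq]].
  - intros n; exists (b n); apply Hb.
  - apply ex_series_ext with b.
    { intros n; symmetry; apply is_series_unique, Hb. }
    unfold b. apply ex_series_ext with (fun n => scal (/ (1 - q) * / t) (gY q d (S n) * x ^ (S n))).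
    { intros n; reflexivity. }
    apply (@ex_series_scal_l R_AbsRing R_NormedModule). exact Hex1.
  - rewrite Heq. rewrite (Series_ext _ b) by (intros n; apply is_series_unique, Hb).
    unfold b. rewrite Series_scal_l. rewrite (Series_incr_1 _ Hex2). simpl gY.
    field. repeat split; lra.
Qed.

Definition eB q (k : nat) (d : nat -> R) (N : nat) : R :=
  match N with 0%nat => 0 | S M => sum_f_R0 d M / qnum q (S M) ^ (S k) end.

Lemma qiter_cons q g gs t : qiter q (g :: gs) t = jackson q (fun u => g u * qiter q gs u) t.
Proof. reflexivity. Qed.

Lemma block q Y (d : nat -> R) rest : 0 < q < 1 -> 0 < Y ->
  (forall n, 0 <= d n) ->
  (forall t, 0 < t < Y -> ex_series (fun n => d n * (t / Y) ^ n) /\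
                          qiter q rest t = Series (fun n => d n * (t / Y) ^ n)) ->
  forall k t, 0 < t < Y -> ex_series (fun n => eB q k d n * (t / Y) ^ n) /\
     qiter q (repeat (fun t => / t) k ++ (fun t => / (Y - t)) :: rest) t
       = Series (fun n => eB q k d n * (t / Y) ^ n).
Proof.
  intros Hq HY Hd Hrest k. induction k as [|k IH]; intros t Ht.
  - simpl app. rewrite qiter_cons.
    destruct (step_Y q Y d (qiter q rest) Hq HY Hd Hrest t Ht) as [E1 E2].
    assert (Hext : forall n, gY q d n * (t / Y) ^ n = eB q 0 d n * (t / Y) ^ n).
    { intros [|n]; simpl; [reflexivity|]. rewrite Rmult_1_r. reflexivity. }
    split.
    + eapply ex_series_ext; [exact Hext| exact E1].
    + rewrite E2. apply Series_ext, Hext.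
  - simpl repeat. simpl app. rewrite qiter_cons.
    assert (Hf0 : forall n, 0 <= eB q k d n).
    { intros [|n]; simpl; [lra|]. pose proof (qnum_ge1 q (S n) Hq ltac:(lia)).
      apply Rdiv_le_0_compat; [apply sum_f_R0_nonneg, Hd|].
      apply Rmult_lt_0_compat; [lra| apply pow_lt; lra]. }
    destruct (step_t q Y (eB q k d) _ Hq HY Hf0 eq_refl IH t Ht) as [E1 E2].
    assert (Hext : forall n, eB q k d n / qnum q n * (t / Y) ^ n = eB q (S k) d n * (t / Y) ^ n).
    { intros [|n]; simpl eB; [unfold Rdiv; ring|].
      pose proof (qnum_ge1 q (S n) Hq ltac:(lia)).
      pose proof (pow_lt (qnum q (S n)) k ltac:(lra)).
      simpl pow. field. split; lra. }
    split.
    + eapply ex_series_ext; [exact Hext| exact E1].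
    + rewrite E2. apply Series_ext, Hext.
Qed.

Definition coef q (s : list nat) (N : nat) : R :=
  match s with
  | nil => match N with 0%nat => 1 | _ => 0 end
  | a :: s' => match N with 0%nat => 0 | _ => zterm q a N * ztail q s' N end
  end.

Lemma fold_plus_c (l : list R) c : fold_right Rplus c l = fold_right Rplus 0 l + c.
Proof. induction l; simpl; [ring| rewrite IHl; ring]. Qed.

Lemma fold_seq_sum (F : nat -> R) M :
  fold_right Rplus 0 (map F (seq 1 M)) =
  sum_f_R0 (fun N => match N with 0%nat => 0 | _ => F N end) M.
Proof.
  induction M as [|M IH]; [reflexivity|].
  rewrite seq_S, map_app, fold_right_app. simpl. rewrite fold_plus_c, IH. ring.
Qed.

Lemma sum_coef q s M : sum_f_R0 (coef q s) M = ztail q s (S M).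
Proof.
  destruct s as [|b s''].
  - simpl. induction M; simpl; [reflexivity| rewrite IHM; ring].
  - simpl ztail. replace (M - 0)%nat with M by lia. rewrite fold_seq_sum.
    apply sum_eq. intros [|i] _; reflexivity.
Qed.

Lemma zterm_nonneg q a k : 0 < q < 1 -> (1 <= k)%nat -> 0 <= zterm q a k.
Proof.
  intros Hq Hk. unfold zterm. pose proof (qnum_ge1 q k Hq Hk).
  apply Rdiv_le_0_compat; [apply pow_le; lra| apply pow_lt; lra].
Qed.

Lemma ztail_nonneg q s K : 0 < q < 1 -> 0 <= ztail q s K.
Proof.
  intros Hq. revert K; induction s as [|b s IH]; intros K; simpl; [lra|].
  destruct K as [|M]; simpl; [lra|]. replace (M - 0)%nat with M by lia.
  rewrite fold_seq_sum. apply sum_f_R0_nonneg. intros [|i]; [lra|].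
  apply Rmult_le_pos; [apply zterm_nonneg; [exact Hq| lia]| apply IH].
Qed.

Lemma coef_nonneg q s N : 0 < q < 1 -> 0 <= coef q s N.
Proof.
  intros Hq. destruct s; destruct N; simpl; try lra.
  apply Rmult_le_pos; [apply zterm_nonneg; [exact Hq| lia]| apply ztail_nonneg, Hq].
Qed.

Lemma coef_shift q a s' y t N : 0 < q < 1 -> (1 <= a)%nat -> 0 < y ->
  eB q (a - 1) (coef q s') N * (t / (y / q ^ (a - 1))) ^ N = coef q (a :: s') N * (t / y) ^ N.
Proof.
  intros Hq Ha Hy. destruct N as [|M]; simpl eB; simpl coef; [ring|].
  rewrite sum_coef. replace (S (a - 1)) with a by lia. unfold zterm.
  pose proof (qnum_ge1 q (S M) Hq ltac:(lia)).
  pose proof (qpow_pos q (a - 1) ltac:(lra)).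
  replace (t / (y / q ^ (a - 1))) with (t / y * q ^ (a - 1)) by (field; lra).
  rewrite Rpow_mult_distr, <- pow_mult.
  rewrite tech_pow_Rmult. replace (S (a - 1)) with a by lia. field. apply pow_nonzero; lra.
Qed.

Lemma zero_series : ex_series (fun _ : nat => 0) /\ Series (fun _ : nat => 0) = 0.
Proof.
  assert (H : is_series (fun _ : nat => 0) 0).
  { apply is_series_ext with (fun j => 0 * (/2) ^ j).
    - intros j; change (0 * (/2) ^ j = 0); ring.
    - assert (E := ser_geom 0 (/2) ltac:(lra)). replace (0 / (1 - /2)) with 0 in E by field. exact E. }
  split; [exists 0; exact H| apply is_series_unique, H].
Qed.

Lemma y_ge q a y : 0 < q < 1 -> 0 < y -> y <= y / q ^ (a - 1).
Proof.
  intros Hq Hy. pose proof (qpow_pos q (a - 1) ltac:(lra)).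
  pose proof (pow_le1 q (a - 1) ltac:(lra)).
  apply Rmult_le_reg_r with (q ^ (a - 1)); [lra|].
  unfold Rdiv; rewrite Rmult_assoc, Rinv_l by lra. nra.
Qed.

Lemma main q s : 0 < q < 1 -> List.Forall (fun x : nat => Nat.le 1 x) s ->
  forall y, 0 < y -> forall t, 0 < t < y ->
  ex_series (fun N => coef q s N * (t / y) ^ N) /\
  qiter q (qintegrand q y s) t = Series (fun N => coef q s N * (t / y) ^ N).
Proof.
  intros Hq HF. induction HF as [|a s' Ha HF IH]; intros y Hy t Ht.
  - destruct zero_series as [Z1 Z2].
    assert (Hext : forall k, 0 = coef q nil (S k) * (t / y) ^ S k) by (intros; simpl; ring).
    assert (Ex : ex_series (fun N => coef q nil N * (t / y) ^ N)).
    { apply (proj2 (@ex_series_incr_1 R_AbsRing R_NormedModule _)).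
      eapply ex_series_ext; [exact Hext| exact Z1]. }
    split; [exact Ex|]. rewrite Series_incr_1 by exact Ex.
    rewrite <- (Series_ext _ _ Hext), Z2. simpl. ring.
  - set (y' := y / q ^ (a - 1)).
    assert (Hyy : y <= y') by (apply y_ge; lra).
    assert (Hy' : 0 < y') by lra.
    destruct (block q y' (coef q s') (qintegrand q y' s') Hq Hy'
               (fun n => coef_nonneg q s' n Hq) (IH y' Hy') (a - 1) t ltac:(lra)) as [E1 E2].
    assert (Hext : forall N, eB q (a - 1) (coef q s') N * (t / y') ^ N = coef q (a :: s') N * (t / y) ^ N).
    { intros N; apply coef_shift; [exact Hq| exact Ha| exact Hy]. }
    split; [eapply ex_series_ext; [exact Hext| exact E1]|].
    change (qintegrand q y (a :: s')) with
      (repeat (fun t : R => / t) (a - 1) ++ (fun t : R => / (y' - t)) :: qintegrand q y' s').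
    rewrite E2. apply Series_ext, Hext.
Qed.

Theorem corollary6p4 (q : R) (s : list nat) :
  0 < q < 1 ->
  s <> nil ->
  List.Forall (fun x : nat => Nat.le 1 x) s ->
  Nat.lt 1 (List.hd 0%nat s) ->
  qzeta q s = qiter q (qintegrand q 1 s) 1.
Proof.
  intros Hq Hne HF Hhd.
  destruct s as [|a s']; [congruence|]. simpl in Hhd.
  inversion HF as [|? ? Ha HF']; subst.
  set (y' := 1 / q ^ (a - 1)).
  assert (Hy' : 1 < y').
  { unfold y'. pose proof (pow_lt1 q (a - 1) Hq ltac:(lia)). pose proof (qpow_pos q (a - 1) ltac:(lra)).
    apply Rmult_lt_reg_r with (q ^ (a - 1)); [lra|].
    unfold Rdiv; rewrite Rmult_assoc, Rinv_l by lra. lra. }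
  destruct (block q y' (coef q s') (qintegrand q y' s') Hq ltac:(lra)
             (fun n => coef_nonneg q s' n Hq) (main q s' Hq HF' y' ltac:(lra)) (a - 1) 1 ltac:(lra)) as [E1 E2].
  assert (Hext : forall N, eB q (a - 1) (coef q s') N * (1 / y') ^ N = coef q (a :: s') N * (1 / 1) ^ N).
  { intros N; apply coef_shift; [exact Hq| lia| lra]. }
  change (qintegrand q 1 (a :: s')) with
    (repeat (fun t : R => / t) (a - 1) ++ (fun t : R => / (y' - t)) :: qintegrand q y' s').
  rewrite E2, (Series_ext _ _ Hext).
  assert (Ex : ex_series (fun N => coef q (a :: s') N * (1 / 1) ^ N))
    by (eapply ex_series_ext; [exact Hext| exact E1]).
  rewrite Series_incr_1 by exact Ex. simpl coef.
  unfold qzeta. rewrite Rmult_0_l, Rplus_0_l.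
  symmetry. apply Series_ext. intros n. replace (1 / 1) with 1 by field. rewrite pow1. ring.
Qed.
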